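(* Let $\Gamma,\Delta$ be finite multisets of $\mathcal{L}_{A_m}^{\Box}$-formulas and $\Pi,\Sigma$ finite multisets of variables such that the sequent $\Box\Gamma,\Pi\Rightarrow\Sigma,\Box\Delta$ is $\mathsf{K(A)}$-valid. Then $\Pi=\Sigma$ and $\Box\Gamma\Rightarrow\Box\Delta$ is $\mathsf{K(A)}$-valid.
   Context: $\mathcal{L}_{A_m}^{\Box}$-formulas are built from a countably infinite set $\mathrm{Var}$ of variables using binary $\to$ and unary $\Box$. Fix $p_0\in\mathrm{Var}$; $\overline{0}:=p_0\to p_0$, $\neg\varphi:=\varphi\to\overline{0}$, $\varphi\&\psi:=\neg\varphi\to\psi$. A $\mathsf{K(A)}$-model $\langle W,R,V\rangle$: nonempty $W$, $R\subseteq W\times W$, $V\colon\mathrm{Var}\times W\to[-r,r]$ for some real $r\ge0$, extended by $V(\varphi\to\psi,x)=V(\psi,x)-V(\varphi,x)$, $V(\Box\varphi,x)=\inf_{\mathbb{R}}\{V(\varphi,y):Rxy\}$ (empty infimum $=0$). A formula is $\mathsf{K(A)}$-valid if its value is $\ge0$ at every world of every model. A sequent $\Gamma\Rightarrow\Delta$ (pair of finite multisets of formulas) is $\mathsf{K(A)}$-valid if $\mathcal{I}(\Gamma\Rightarrow\Delta)$ is, where $\mathcal{I}(\varphi_1,\dots,\varphi_n\Rightarrow\psi_1,\dots,\psi_m):=(\varphi_1\&\dots\&\varphi_n)\to(\psi_1\&\dots\&\psi_m)$, empty $\&$-combination $=\overline{0}$. $\Box\Gamma=[\Box\varphi:\varphi\in\Gamma]$;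 commas denote multiset union. *)

(* Defs.v *)
From mathcomp Require Import all_boot all_order all_algebra.
From mathcomp Require Import all_classical all_reals.
From mathcomp Require Import Rstruct.
Unset Printing Implicit Defensive.
Import Order.TTheory GRing.Theory Num.Theory.
Local Open Scope classical_set_scope.
Local Open Scope ring_scope.

Inductive fml : Type :=
| Var : nat -> fml
| Imp : fml -> fml -> fml
| Box : fml -> fml.

Definition p0 : nat := 0%N.
Definition zero : fml := Imp (Var p0) (Var p0).
Definition Neg (a : fml) : fml := Imp a zero.
Definition And (a b : fml) : fml := Imp (Neg a) b.

Fixpoint bigAnd (s : seq fml) : fml :=
  match s with
  | [::] => zero
  | [:: a] => a
  | a :: s' => And a (bigAnd s')
  end.

Record model : Type := Model {
  world : Type;
  world_nonempty : inhabited world;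
  rel : world -> world -> Prop;
  valv : nat -> world -> Rdefinitions.R;
  bound : Rdefinitions.R;
  bound_ge0 : 0 <= bound;
  valv_bounded : forall p x, - bound <= valv p x <= bound
}.

(* value of a formula at a world; inf over the reals, with inf set0 = 0
   (this is the library convention, lemma inf0) *)
Fixpoint value (M : model) (a : fml) (x : world M) : Rdefinitions.R :=
  match a with
  | Var p => valv M p x
  | Imp a b => value M b x - value M a x
  | Box a => inf [set value M a y | y in [set y | rel M x y]]
  end.

Definition KA_valid (a : fml) : Prop :=
  forall (M : model) (x : world M), 0 <= value M a x.

(* sequents are pairs of finite multisets, represented as sequences *)
Definition seq_interp (G D : seq fml) : fml := Imp (bigAnd G) (bigAnd D).

Definition KA_valid_seq (G D : seq fml) : Prop := KA_valid (seq_interp G D).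

(* Main.v *)
Require Import Defs.
From mathcomp Require Import all_boot all_order all_algebra.
From mathcomp Require Import all_classical all_reals.
From mathcomp Require Import Rstruct.
From mathcomp Require Import lra.
Import Order.TTheory GRing.Theory Num.Theory.
Local Open Scope classical_set_scope.
Local Open Scope ring_scope.

Lemma value_bigAnd (M : model) (s : seq fml) (x : world M) :
  value M (bigAnd s) x = \sum_(a <- s) value M a x.
Proof.
elim: s => [|a s IH]; first by rewrite big_nil /= subrr.
case: s IH => [|b s] IH; first by rewrite big_cons big_nil addr0.
rewrite big_cons -IH /=; rewrite subrr; lra.
Qed.

Lemma value_seq (M : model) G D (x : world M) :
  value M (seq_interp G D) x = \sum_(a <- D) value M a x - \sum_(a <- G) value M a x.
Proof. by rewrite /= !value_bigAnd. Qed.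

Section Triv.
Variables (a : pred nat) (t : bool).
Definition tval (p : nat) (_ : unit) : Rdefinitions.R :=
  if a p then (if t then 1 else -1) else 0.
Lemma tval_b p x : - 1 <= tval p x <= 1.
Proof. rewrite /tval; case: (a p); case: t; apply/andP; split; lra. Qed.
Definition tmodel : model :=
  @Model unit (inhabits tt) (fun _ _ => False) tval 1 ler01 tval_b.
End Triv.

Lemma tmodel_box a t f : value (tmodel a t) (Box f) tt = 0.
Proof.
rewrite /= -[RHS](inf0 (Rdefinitions.R)); congr inf.
by apply/seteqP; split => r //= [y].
Qed.

Lemma sum_tvar a t s :
  \sum_(p <- s) value (tmodel a t) (Var p) tt = (if t then 1 else -1) *+ count a s.
Proof.
elim: s => [|p s IH]; first by rewrite big_nil.
rewrite big_cons IH /= /tval mulrnDr; case: (a p) => //=; by rewrite add0r.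
Qed.

Section Ext.
Variables (M : model) (x : world M).
Definition erel (u v : option (world M)) : Prop :=
  match u, v with
  | None, Some z => Defs.rel M x z
  | Some y, Some z => Defs.rel M y z
  | _, _ => False
  end.
Definition evalv (p : nat) (u : option (world M)) : Rdefinitions.R :=
  match u with None => 0 | Some y => valv M p y end.
Lemma evalv_b p u : - bound M <= evalv p u <= bound M.
Proof.
case: u => [y|]; first exact: valv_bounded.
have := bound_ge0 M => h; apply/andP; split => /=; lra.
Qed.
Definition emodel : model :=
  @Model (option (world M)) (inhabits None) erel evalv (bound M) (bound_ge0 M) evalv_b.

Lemma evalue f y : value emodel f (Some y) = value M f y.
Proof.
elim: f y => [p|f IHf g IHg|f IH] y //=.
- by rewrite IHf IHg.
- congr inf; apply/seteqP; split => r /=.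
  + by case=> [[z|] //= hz <-]; exists z => //; rewrite IH.
  + by case=> z hz <-; exists (Some z) => //; rewrite IH.
Qed.

Lemma evalue_box f : value emodel (Box f) None = value M (Box f) x.
Proof.
rewrite /=; congr inf; apply/seteqP; split => r /=.
+ by case=> [[z|] //= hz <-]; exists z => //; rewrite evalue.
+ by case=> z hz <-; exists (Some z) => //; rewrite evalue.
Qed.
End Ext.

Theorem lemma4p8 (Gamma Delta : seq fml) (Pi Sigma : seq nat) :
  KA_valid_seq (map Box Gamma ++ map Var Pi) (map Var Sigma ++ map Box Delta) ->
  perm_eq Pi Sigma /\ KA_valid_seq (map Box Gamma) (map Box Delta).
Proof.
move=> H; split.
- apply/permP => a.
  have E (t : bool) : 0 <= ( (if t then 1 else -1) *+ count a Sigma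
                 - (if t then 1 else -1) *+ count a Pi :> Rdefinitions.R).
    have := H (tmodel a t) tt.
    rewrite value_seq !big_cat !big_map !sum_tvar.
    have -> : \sum_(j <- Gamma) value (tmodel a t) (Box j) tt = 0.
      by rewrite big1 // => f _; rewrite tmodel_box.
    have -> : \sum_(j <- Delta) value (tmodel a t) (Box j) tt = 0.
      by rewrite big1 // => f _; rewrite tmodel_box.
    by rewrite /= addr0 add0r.
  have := E true; have := E false.
  rewrite /= !mulNrn => h1 h2.
  have L1 : (count a Pi)%:R <= (count a Sigma)%:R :> Rdefinitions.R by lra.
  have L2 : (count a Sigma)%:R <= (count a Pi)%:R :> Rdefinitions.R by lra.
  rewrite ler_nat in L1; rewrite ler_nat in L2.
  by apply/eqP; rewrite eqn_leq L1 L2.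
- move=> M x.
  have := H (emodel M x) None.
  rewrite !value_seq !big_cat !big_map.
  have -> : \sum_(j <- Pi) value (emodel M x) (Var j) None = 0.
    by rewrite big1.
  have -> : \sum_(j <- Sigma) value (emodel M x) (Var j) None = 0.
    by rewrite big1.
  have EG : forall s, \sum_(j <- s) value (emodel M x) (Box j) None
                     = \sum_(j <- s) value M (Box j) x.
    by move=> s; apply: eq_bigr => f _; rewrite evalue_box.
  rewrite !EG.
  by rewrite /= add0r addr0.
Qed.
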